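(* Let $\Lambda$ be a row-finite $k$-graph with no sources and let $\alpha$ be an action of $\mathbb{Z}^l$ on $\Lambda$ by automorphisms. Then for $x\in\Lambda^\infty$ and $(p,m)\in\mathbb{N}^k\times\mathbb{N}^l$, the shift map on $(\Lambda\times_\alpha\mathbb{Z}^l)^\infty$ satisfies $\sigma^{(p,m)}(x,\infty)=(\alpha^\infty_{-m}(\sigma^p(x)),\infty)$. Moreover, $\sigma^p\circ\alpha^\infty_{-m}=\alpha^\infty_{-m}\circ\sigma^p$; in particular $\sigma^{(p,m)}(x,\infty)=(\sigma^p(\alpha^\infty_{-m}(x)),\infty)$.
   Context: A $k$-graph is a countable category $\Lambda$ with a functor $d:\Lambda\to\mathbb{N}^k$ with unique factorisation; vertices are degree-$0$ morphisms; row-finite: each $v\Lambda^n$ finite; no sources: each $v\Lambda^n$ nonempty. An automorphism is a bijective degree-preserving functor. $\Lambda\times_\alpha\mathbb{Z}^l$ is the $(k+l)$-graph with morphisms $\Lambda\times\mathbb{N}^l$, degree $(d(\lambda),m)$, $r(\lambda,m)=(r(\lambda),0)$, $s(\lambda,m)=(\alpha_{-m}(s(\lambda)),0)$, $(\mu,m)(\nu,n)=(\mu\alpha_m(\nu),m+n)$. For a $j$-graph $\Gamma$, $\Gamma^\infty$ is the set of degree-preserving functors $x:\Omega_j\to\Gamma$ ($\Omega_j=\{(a,b)\in\mathbb{N}^j\times\mathbb{N}^j:a\le b\}$, $r(a,b)=(a,a)$, $s(a,b)=(b,b)$, $(a,b)(b,c)=(a,c)$, $d(a,b)=b-a$); $\sigma^q(x)$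 is the infinite path with $\sigma^q(x)(0,n)=x(q,q+n)$. For an automorphism $\phi$ of $\Lambda$, $\phi^\infty(x)$ is the infinite path with $\phi^\infty(x)(0,n)=\phi(x(0,n))$. For $x\in\Lambda^\infty$, $(x,\infty)$ denotes the unique infinite path of $\Lambda\times_\alpha\mathbb{Z}^l$ with $(x,\infty)((0,0),(p,0))=(x(0,p),0)$ for all $p\in\mathbb{N}^k$. *)

(* Defs.v *)
From mathcomp Require Import all_boot all_order all_algebra.
From Stdlib Require List.
Set Implicit Arguments. Unset Strict Implicit. Unset Printing Implicit Defensive.

Definition Nk (k : nat) := {ffun 'I_k -> nat}.
Definition Zl (l : nat) := {ffun 'I_l -> int}.

Definition Nzero k : Nk k := [ffun => 0%N].
Definition Nadd k (a b : Nk k) : Nk k := [ffun i => (a i + b i)%N].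
Definition Nsub k (a b : Nk k) : Nk k := [ffun i => (a i - b i)%N].
Definition Nle k (a b : Nk k) : bool := [forall i, (a i <= b i)%N].

Definition Zzero l : Zl l := [ffun => 0%R].
Definition Zadd l (a b : Zl l) : Zl l := [ffun i => (a i + b i)%R].
Definition NtoZ l (m : Nk l) : Zl l := [ffun i => ((m i)%:Z)%R].
Definition Nneg l (m : Nk l) : Zl l := [ffun i => (- (m i)%:Z)%R].

(* (p, m) in N^k x N^l viewed as an element of N^(k+l) *)
Definition Njoin k l (p : Nk k) (m : Nk l) : Nk (k + l) :=
  [ffun i => match split i with inl a => p a | inr b => m b end].

(* ---------- raw data of a category with a degree map to N^k ----------
   Single-sorted presentation: objects are the identity morphisms,
   [r f] and [s f] are the identity morphisms at the range and source of f,
   [comp f g] is the composite fg (meaningful only when s f = r g). *)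
Record kdata (k : nat) := KData {
  Mor : Type;
  rg : Mor -> Mor;
  sc : Mor -> Mor;
  comp : Mor -> Mor -> Mor;
  deg : Mor -> Nk k }.
Arguments rg {k} _ _.
Arguments sc {k} _ _.
Arguments comp {k} _ _ _.
Arguments deg {k} _ _.

Definition is_category k (L : kdata k) : Prop :=
  [/\ (forall f, rg L (rg L f) = rg L f /\ sc L (rg L f) = rg L f),
      (forall f, rg L (sc L f) = sc L f /\ sc L (sc L f) = sc L f),
      (forall f, comp L (rg L f) f = f /\ comp L f (sc L f) = f),
      (forall f g, sc L f = rg L g ->
         rg L (comp L f g) = rg L f /\ sc L (comp L f g) = sc L g)
    & (forall f g h, sc L f = rg L g -> sc L g = rg L h ->
         comp L (comp L f g) h = comp L f (comp L g h))].

Definition deg_functor k (L : kdata k) : Prop :=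
  (forall f, deg L (rg L f) = Nzero k) /\
  (forall f g, sc L f = rg L g -> deg L (comp L f g) = Nadd (deg L f) (deg L g)).

Definition unique_factorisation k (L : kdata k) : Prop :=
  forall (lam : Mor L) (m n : Nk k), deg L lam = Nadd m n ->
    exists! mn : Mor L * Mor L,
      [/\ sc L mn.1 = rg L mn.2, deg L mn.1 = m, deg L mn.2 = n
        & lam = comp L mn.1 mn.2].

Definition countable_mor k (L : kdata k) : Prop :=
  exists f : Mor L -> nat, injective f.

Definition is_kgraph k (L : kdata k) : Prop :=
  [/\ countable_mor L, is_category L, deg_functor L & unique_factorisation L].

Definition is_vertex k (L : kdata k) (v : Mor L) : Prop := rg L v = v.

Definition row_finite k (L : kdata k) : Prop :=
  forall (v : Mor L) (n : Nk k), is_vertex v ->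
    exists s : seq (Mor L), forall lam, rg L lam = v -> deg L lam = n -> List.In lam s.

Definition no_sources k (L : kdata k) : Prop :=
  forall (v : Mor L) (n : Nk k), is_vertex v ->
    exists lam, rg L lam = v /\ deg L lam = n.

Definition is_automorphism k (L : kdata k) (phi : Mor L -> Mor L) : Prop :=
  [/\ bijective phi,
      (forall f, deg L (phi f) = deg L f),
      (forall f, phi (rg L f) = rg L (phi f)),
      (forall f, phi (sc L f) = sc L (phi f))
    & (forall f g, sc L f = rg L g -> phi (comp L f g) = comp L (phi f) (phi g))].

Definition is_action k l (L : kdata k) (alpha : Zl l -> Mor L -> Mor L) : Prop :=
  [/\ (forall n, @is_automorphism k L (alpha n)),
      (forall f, alpha (Zzero l) f = f)
    & (forall n1 n2 f, alpha (Zadd n1 n2) f = alpha n1 (alpha n2 f))].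

Definition skew_prod k l (L : kdata k) (alpha : Zl l -> Mor L -> Mor L) : kdata (k + l) :=
  @KData (k + l) (Mor L * Nk l)
    (fun lm => (rg L lm.1, Nzero l))
    (fun lm => (alpha (Nneg lm.2) (sc L lm.1), Nzero l))
    (fun mu nu => (comp L mu.1 (alpha (NtoZ mu.2) nu.1), Nadd mu.2 nu.2))
    (fun lm => Njoin (deg L lm.1) lm.2).

(* ---------- infinite paths ----------
   A degree-preserving functor Omega_j -> Gamma, represented as a function
   x a b = x(a,b), only the values with a <= b being relevant. *)
Definition ipath j (G : kdata j) := Nk j -> Nk j -> Mor G.

Definition is_inf_path j (G : kdata j) (x : ipath G) : Prop :=
  forall a b c : Nk j, Nle a b -> Nle b c ->
    [/\ deg G (x a b) = Nsub b a,
        rg G (x a b) = x a a,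
        sc G (x a b) = x b b
      & x a c = comp G (x a b) (x b c)].

Definition ipeq j (G : kdata j) (x y : ipath G) : Prop :=
  forall a b : Nk j, Nle a b -> x a b = y a b.

Definition shift j (G : kdata j) (q : Nk j) (x : ipath G) : ipath G :=
  fun a b => x (Nadd q a) (Nadd q b).

Definition aut_inf j (G : kdata j) (phi : Mor G -> Mor G) (x : ipath G) : ipath G :=
  fun a b => phi (x a b).

(* y is (x, infty): an infinite path of the skew_prod product with
   y((0,0),(p,0)) = (x(0,p), 0) for all p *)
Definition is_xinf k l (L : kdata k) (alpha : Zl l -> Mor L -> Mor L)
  (x : ipath L) (y : ipath (skew_prod alpha)) : Prop :=
  is_inf_path y /\
  forall p : Nk k,
    y (Njoin (Nzero k) (Nzero l)) (Njoin p (Nzero l)) = (x (Nzero k) p, Nzero l).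

(* Main.v *)
Require Import Defs.
From mathcomp Require Import all_boot all_order all_algebra.
Set Implicit Arguments. Unset Strict Implicit. Unset Printing Implicit Defensive.

Lemma split_l k l (i : 'I_k) : split (lshift l i) = inl i.
Proof. exact: (unsplitK (inl _ i)). Qed.
Lemma split_r k l (i : 'I_l) : split (rshift k i) = inr i.
Proof. exact: (unsplitK (inr _ i)). Qed.

Lemma Njoin_inj k l (u u' : Nk k) (v v' : Nk l) :
  Njoin u v = Njoin u' v' -> u = u' /\ v = v'.
Proof.
move=> E; split; apply/ffunP => i.
  by have := congr1 (fun f : Nk (k + l) => f (lshift l i)) E => /=; rewrite !ffunE split_l.
by have := congr1 (fun f : Nk (k + l) => f (rshift k i)) E => /=; rewrite !ffunE split_r.
Qed.

Lemma Njoin_surj k l (b : Nk (k + l)) :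
  b = Njoin [ffun i => b (lshift l i)] [ffun j => b (rshift k j)].
Proof.
apply/ffunP => i; rewrite !ffunE.
by rewrite -{1}(splitK i); case: (split i) => j /=; rewrite ffunE.
Qed.

Lemma Njoin_add k l (u u' : Nk k) (v v' : Nk l) :
  Nadd (Njoin u v) (Njoin u' v') = Njoin (Nadd u u') (Nadd v v').
Proof. by apply/ffunP => i; rewrite !ffunE; case: (split i) => j; rewrite !ffunE. Qed.

Lemma Njoin_sub k l (u u' : Nk k) (v v' : Nk l) :
  Nsub (Njoin u v) (Njoin u' v') = Njoin (Nsub u u') (Nsub v v').
Proof. by apply/ffunP => i; rewrite !ffunE; case: (split i) => j; rewrite !ffunE. Qed.

Lemma Nle_join k l (u u' : Nk k) (v v' : Nk l) :
  Nle u u' -> Nle v v' -> Nle (Njoin u v) (Njoin u' v').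
Proof.
move=> /forallP H1 /forallP H2; apply/forallP => i; rewrite !ffunE.
by case: (split i).
Qed.

Lemma Nle_joinE k l (u u' : Nk k) (v v' : Nk l) :
  Nle (Njoin u v) (Njoin u' v') -> Nle u u' /\ Nle v v'.
Proof.
move=> /forallP H; split; apply/forallP => i.
  by have := H (lshift l i); rewrite !ffunE split_l.
by have := H (rshift k i); rewrite !ffunE split_r.
Qed.

Lemma Nle0 k (u : Nk k) : Nle (Nzero k) u.
Proof. by apply/forallP => i; rewrite ffunE. Qed.
Lemma Nle_refl k (u : Nk k) : Nle u u.
Proof. by apply/forallP => i. Qed.
Lemma Nle_add k (p u v : Nk k) : Nle u v -> Nle (Nadd p u) (Nadd p v).
Proof. by move=> /forallP H; apply/forallP => i; rewrite !ffunE leq_add2l. Qed.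
Lemma Nsub_add k (p u v : Nk k) : Nsub (Nadd p v) (Nadd p u) = Nsub v u.
Proof. by apply/ffunP => i; rewrite !ffunE subnDl. Qed.
Lemma Nsub0 k (u : Nk k) : Nsub u (Nzero k) = u.
Proof. by apply/ffunP => i; rewrite !ffunE subn0. Qed.
Lemma Nsub_addK k (u v : Nk k) : Nle u v -> Nadd u (Nsub v u) = v.
Proof. by move=> /forallP H; apply/ffunP => i; rewrite !ffunE subnKC. Qed.
Lemma Nsubnn k (u : Nk k) : Nsub u u = Nzero k.
Proof. by apply/ffunP => i; rewrite !ffunE subnn. Qed.
Lemma Nneg0 l : Nneg (Nzero l) = Zzero l.
Proof. by apply/ffunP => i; rewrite !ffunE. Qed.
Lemma NtoZ0 l : NtoZ (Nzero l) = Zzero l.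
Proof. by apply/ffunP => i; rewrite !ffunE. Qed.
Lemma NtoZ_neg l (m : Nk l) : Zadd (NtoZ m) (Nneg m) = Zzero l.
Proof. by apply/ffunP => i; rewrite !ffunE GRing.subrr. Qed.
Lemma Nneg_add l (m u : Nk l) : Nneg (Nadd m u) = Zadd (Nneg u) (Nneg m).
Proof. by apply/ffunP => i; rewrite !ffunE PoszD GRing.opprD GRing.addrC. Qed.

Lemma deg0 k (L : kdata k) (f : Mor L) : is_kgraph L -> deg L f = Nzero k -> f = rg L f.
Proof.
case=> _ [C1 C2 C3 C4 C5] [D1 D2] UF Hd.
have Hd' : deg L f = Nadd (Nzero k) (Nzero k).
  by rewrite Hd; apply/ffunP => i; rewrite !ffunE.
case: (UF f _ _ Hd') => mn [_ Hu].
have e1 : (rg L f, f) = mn.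
  symmetry; apply: Hu; split => /=; [by case: (C1 f)| exact: D1 | exact: Hd | by case: (C3 f)].
have e2 : (f, sc L f) = mn.
  symmetry; apply: Hu; split => /=; [by case: (C2 f)| exact: Hd | | by case: (C3 f)].
  by case: (C2 f) => <- _; rewrite D1.
by rewrite -e2 in e1; case: e1.
Qed.

Lemma alpha_inv k l (L : kdata k) (alpha : Zl l -> Mor L -> Mor L) m f :
  is_action alpha -> alpha (NtoZ m) (alpha (Nneg m) f) = f.
Proof. by case=> _ H0 HA; rewrite -HA NtoZ_neg H0. Qed.

Lemma alpha_inv' k l (L : kdata k) (alpha : Zl l -> Mor L -> Mor L) m f :
  is_action alpha -> alpha (Nneg m) (alpha (NtoZ m) f) = f.
Proof.
case=> _ H0 HA; rewrite -HA.
have -> : Zadd (Nneg m) (NtoZ m) = Zzero l.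
  by apply/ffunP => i; rewrite !ffunE GRing.addNr.
by rewrite H0.
Qed.

Section Char.
Variables (k l : nat) (L : kdata k) (alpha : Zl l -> Mor L -> Mor L).
Hypotheses (HL : is_kgraph L) (Halpha : is_action alpha).

Lemma charA (x : ipath L) (y : ipath (skew_prod alpha)) :
  is_inf_path x -> is_xinf x y -> forall b1 b2,
  (y (Njoin (Nzero k) (Nzero l)) (Njoin b1 b2)).1 = x (Nzero k) b1.
Proof.
move=> Hx [Hy Hxy] b1 b2.
set O := Njoin (Nzero k) (Nzero l).
set B1 := Njoin b1 (Nzero l).
have le1 : Nle O B1 by apply: Nle_join; apply: Nle0.
have le2 : Nle B1 (Njoin b1 b2) by apply: Nle_join; [apply: Nle_refl|apply: Nle0].
have le0 : Nle O O by apply: Nle_refl.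
have [_ _ Hs1 _] := Hy O B1 B1 le1 (Nle_refl _).
have [Hd2 Hr2 _ _] := Hy B1 (Njoin b1 b2) (Njoin b1 b2) le2 (Nle_refl _).
have [_ _ _ Hc] := Hy O B1 (Njoin b1 b2) le1 le2.
rewrite Hc /= Hxy /= NtoZ0.
case: Halpha => _ H0 _; rewrite H0.
move: Hd2 Hr2; destruct (y B1 (Njoin b1 b2)) as [f n] => /= Hd2 Hr2.
rewrite Njoin_sub in Hd2; case: (Njoin_inj Hd2) => Hdf _.
rewrite Nsubnn in Hdf.
have := deg0 HL Hdf => ->.
rewrite -Hs1 Hxy in Hr2; case: Hr2 => ->.
rewrite Nneg0 H0.
by case: HL => _ [_ _ C3 _ _] _ _; case: (C3 (x (Nzero k) b1)).
Qed.

Lemma char (x : ipath L) (y : ipath (skew_prod alpha)) :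
  is_inf_path x -> is_xinf x y -> forall a1 a2 b1 b2,
  Nle a1 b1 -> Nle a2 b2 ->
  y (Njoin a1 a2) (Njoin b1 b2) = (alpha (Nneg a2) (x a1 b1), Nsub b2 a2).
Proof.
move=> Hx Hxy a1 a2 b1 b2 l1 l2.
have HA := charA Hx Hxy.
case: Hxy => Hy _.
set O := Njoin (Nzero k) (Nzero l).
have lOa : Nle O (Njoin a1 a2) by apply: Nle_join; apply: Nle0.
have lab : Nle (Njoin a1 a2) (Njoin b1 b2) by apply: Nle_join.
have [HdOa _ HsOa _] := Hy O (Njoin a1 a2) (Njoin a1 a2) lOa (Nle_refl _).
have [Hdab Hrab _ _] := Hy (Njoin a1 a2) (Njoin b1 b2) (Njoin b1 b2) lab (Nle_refl _).
have [_ _ _ Hc] := Hy O (Njoin a1 a2) (Njoin b1 b2) lOa lab.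
have HB := HA b1 b2; rewrite Hc /= in HB.
case Ea : (y O (Njoin a1 a2)) => [f n]; rewrite Ea /= in HB HdOa HsOa.
have Hf : f = x (Nzero k) a1 by have := HA a1 a2; rewrite /O Ea.
rewrite Njoin_sub !Nsub0 in HdOa; case: (Njoin_inj HdOa) => _ Hn.
subst f n.
case Eb : (y (Njoin a1 a2) (Njoin b1 b2)) => [g n]; rewrite Eb /= in HB Hdab Hrab.
rewrite Njoin_sub in Hdab; case: (Njoin_inj Hdab) => Hdg Hn; subst n.
rewrite -HsOa in Hrab; case: Hrab => Hrg.
case: Halpha => Haut _ _.
case: (Haut (NtoZ a2)) => _ Hdeg Hrg' _ _.
case: HL => _ _ _ UF.
have [ha hb hc hd] := Hx (Nzero k) a1 b1 (Nle0 _) l1.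
have Hdeg0 : deg L (x (Nzero k) b1) = Nadd a1 (Nsub b1 a1).
  by have [-> _ _ _] := Hx (Nzero k) b1 b1 (Nle0 _) (Nle_refl _); rewrite Nsub0 Nsub_addK.
case: (UF _ _ _ Hdeg0) => mn [_ Hu].
have e1 : (x (Nzero k) a1, x a1 b1) = mn.
  have [he hf _ _] := Hx a1 b1 b1 l1 (Nle_refl _).
  symmetry; apply: Hu; split => //=; by rewrite ?ha ?Nsub0 ?hc ?hf.
have e2 : (x (Nzero k) a1, alpha (NtoZ a2) g) = mn.
  symmetry; apply: Hu; split => //=; rewrite ?Hdeg ?ha ?Nsub0 //.
  by rewrite -Hrg' Hrg alpha_inv.
rewrite -e2 in e1; case: e1 => ->.
by rewrite alpha_inv'.
Qed.
End Char.

Lemma shift_aut_inf k l (L : kdata k) (alpha : Zl l -> Mor L -> Mor L) p m x :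
  is_action alpha -> is_inf_path x ->
  is_inf_path (aut_inf (alpha (Nneg m)) (shift p x)).
Proof.
case=> Haut _ _ Hx a b c lab lbc.
have [_ Ad Ar As Ac] := Haut (Nneg m).
have [h1 h2 h3 h4] := Hx _ _ _ (Nle_add p lab) (Nle_add p lbc).
rewrite /aut_inf /shift; split.
- by rewrite Ad h1 Nsub_add.
- by rewrite -Ar h2.

- by rewrite -As h3.
- rewrite h4 Ac //; have [_ -> _ _] := Hx _ _ _ (Nle_add p lbc) (Nle_add p (Nle_refl c)); exact: h3.
Qed.

Lemma part1 k l (L : kdata k) (alpha : Zl l -> Mor L -> Mor L) p m x
  (y z : ipath (skew_prod alpha)) :
  is_kgraph L -> is_action alpha -> is_inf_path x ->
  is_xinf x y -> is_xinf (aut_inf (alpha (Nneg m)) (shift p x)) z ->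
  ipeq (shift (Njoin p m) y) z.
Proof.
move=> HL Ha Hx Hy Hz a b.
have [a1 [a2 ->]] : exists a1 a2, a = Njoin a1 a2 by do 2 eexists; exact: Njoin_surj.
have [b1 [b2 ->]] : exists b1 b2, b = Njoin b1 b2 by do 2 eexists; exact: Njoin_surj.
move=> /Nle_joinE [l1 l2].
rewrite /shift !Njoin_add.
rewrite (char HL Ha Hx Hy (Nle_add p l1) (Nle_add m l2)).
rewrite (char HL Ha (shift_aut_inf p m Ha Hx) Hz l1 l2).
rewrite Nsub_add Nneg_add /aut_inf /shift.
by case: Ha => _ _ ->.
Qed.

Theorem lemma4p5 (k l : nat) (L : kdata k) (alpha : Zl l -> Mor L -> Mor L)
  (HL : is_kgraph L) (Hrf : row_finite L) (Hns : no_sources L)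
  (Halpha : is_action alpha)
  (x : ipath L) (Hx : is_inf_path x) (p : Nk k) (m : Nk l)
  (y z w : ipath (skew_prod alpha)) :
  is_xinf x y ->
  is_xinf (aut_inf (alpha (Nneg m)) (shift p x)) z ->
  is_xinf (shift p (aut_inf (alpha (Nneg m)) x)) w ->
  [/\ ipeq (shift (Njoin p m) y) z,
      (forall x' : ipath L, is_inf_path x' ->
         ipeq (shift p (aut_inf (alpha (Nneg m)) x'))
              (aut_inf (alpha (Nneg m)) (shift p x')))
    & ipeq (shift (Njoin p m) y) w].
Proof.
move=> Hy Hz Hw; split.
- exact: part1 Hz.
- by [].
- exact: (part1 HL Halpha Hx Hy Hw).
Qed.
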